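(* Let $r\ge 2$, $\alpha=2^r-1$, $\beta=2^{r-1}(2^r-1)$, let $\mathcal{C}\subseteq\mathbb{Z}_2^\alpha\times\mathbb{Z}_4^\beta$ be a $\mathbb{Z}_2\mathbb{Z}_4$-additive 1-perfect code and $D=\mathcal{C}^\perp$. Then every nonzero codeword of $D$ has weight $2^{2r-1}$.
   Context: A $\mathbb{Z}_2\mathbb{Z}_4$-additive code is an additive subgroup of $\mathbb{Z}_2^\alpha\times\mathbb{Z}_4^\beta$; vectors are $\mathbf{u}=(u\mid u')$ with $u\in\mathbb{Z}_2^\alpha$, $u'\in\mathbb{Z}_4^\beta$. The weight is $w(\mathbf{u})=w_H(u)+w_L(u')$ (Hamming weight plus Lee weight, Lee weights of $0,1,2,3$ being $0,1,2,1$). The Gray map $\phi:\mathbb{Z}_4\to\mathbb{Z}_2^2$ is $0\mapsto(0,0),1\mapsto(0,1),2\mapsto(1,1),3\mapsto(1,0)$, $\Phi(u\mid u')=(u\mid\phi(u'_1),\dots,\phi(u'_\beta))$. A binary code $C\subseteq\mathbb{Z}_2^n$ is 1-perfect if the Hamming balls of radius 1 around its codewords partition $\mathbb{Z}_2^n$; a $\mathbb{Z}_2\mathbb{Z}_4$-additive code is 1-perfect if its Gray image is. The dual is $\mathcal{C}^\perp=\{\mathbf{v}:\mathbf{u}\cdot\mathbf{v}=0\ \forall\mathbf{u}\in\mathcal{C}\}$ with $\mathbf{u}\cdot\mathbf{v}=2\sum_{i=1}^\alpha u_iv_i+\sum_{j=1}^\beta u'_jv'_j\in\mathbb{Z}_4$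 (binary entries read as $0,1\in\mathbb{Z}_4$). *)

(* Defs.v *)
From mathcomp Require Import all_boot all_algebra.
Set Implicit Arguments. Unset Strict Implicit. Unset Printing Implicit Defensive.
Import GRing.Theory.
Local Open Scope ring_scope.

Notation Z2Z4 a b := ('rV['Z_2]_a * 'rV['Z_4]_b)%type.

(* additive code = additive subgroup (nonempty subset closed under +;
   in a finite group this is equivalent to being a subgroup) *)
Definition additive_code a b (C : {set Z2Z4 a b}) : Prop :=
  (0 : Z2Z4 a b) \in C /\ (forall u v, u \in C -> v \in C -> u + v \in C).

Definition wH n (x : 'rV['Z_2]_n) : nat := #|[set i | x ord0 i != 0]|.

Definition wL (x : 'Z_4) : nat := minn (x : nat) (4 - x)%N.

Definition wt a b (v : Z2Z4 a b) : nat :=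
  (wH v.1 + \sum_(j < b) wL (v.2 ord0 j))%N.

(* Gray map phi : Z_4 -> Z_2^2 : 0->(0,0), 1->(0,1), 2->(1,1), 3->(1,0) *)
Definition gray1 (x : 'Z_4) : 'Z_2 := ((2 <= (x : nat))%N : nat)%:R.
Definition gray2 (x : 'Z_4) : 'Z_2 :=
  (((x : nat) == 1%N) || ((x : nat) == 2%N) : nat)%:R.

(* Phi(u | u') = (u | phi(u'_1), ..., phi(u'_b)), coordinates in order *)
Definition Phi a b (v : Z2Z4 a b) : 'rV['Z_2]_(a + b * 2) :=
  row_mx v.1 (mxvec (\matrix_(j < b, c < 2)
     (if c == ord0 then gray1 (v.2 ord0 j) else gray2 (v.2 ord0 j)))).

Definition gray_image a b (C : {set Z2Z4 a b}) : {set 'rV['Z_2]_(a + b * 2)} :=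
  (@Phi a b) @: C.

(* binary 1-perfect code: radius-1 Hamming balls around codewords
   partition Z_2^n, i.e. every vector lies in exactly one such ball *)
Definition perfect1 n (C : {set 'rV['Z_2]_n}) : Prop :=
  forall x : 'rV['Z_2]_n, #|[set c in C | (wH (x - c) <= 1)%N]| = 1%N.

Definition Z2Z4_perfect1 a b (C : {set Z2Z4 a b}) : Prop :=
  perfect1 (gray_image C).

(* inner product in Z_4; binary entries read as 0,1 in Z_4 *)
Definition ip a b (u v : Z2Z4 a b) : 'Z_4 :=
  2 * (\sum_(i < a) (((u.1 ord0 i : nat) * (v.1 ord0 i : nat))%N)%:R)
  + \sum_(j < b) u.2 ord0 j * v.2 ord0 j.

Definition dual a b (C : {set Z2Z4 a b}) : {set Z2Z4 a b} :=
  [set v | [forall u in C, ip u v == 0]].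

(* Main.v *)
Require Import Defs.
From mathcomp Require Import all_boot all_algebra.
From mathcomp Require Import zify ring.
Set Implicit Arguments. Unset Strict Implicit. Unset Printing Implicit Defensive.
Import GRing.Theory Num.Theory.
Local Open Scope ring_scope.

Lemma wHE n (x : 'rV['Z_2]_n) : wH x = (\sum_i (x ord0 i != 0%R : nat))%N.
Proof.
rewrite /wH -sum1_card big_mkcond /=; apply: eq_bigr => i _; rewrite inE.
by case: (_ != 0).
Qed.

Lemma gray_iso1 (a b : 'Z_4) :
  (((gray1 a - gray1 b)%R != 0%R : nat) + ((gray2 a - gray2 b)%R != 0%R : nat))%N = wL (a - b).
Proof.
case: a => [[|[|[|[|m]]]] Hm]; case: b => [[|[|[|[|k]]]] Hk]; try by [].
all: by apply/eqP; vm_compute.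
Qed.

Lemma wH_row_mx m n (x : 'rV['Z_2]_m) (y : 'rV['Z_2]_n) :
  wH (row_mx x y) = (wH x + wH y)%N.
Proof.
rewrite !wHE big_split_ord /=; congr (_ + _)%N; apply: eq_bigr => i _.
  by rewrite row_mxEl.
by rewrite row_mxEr.
Qed.

Lemma wH_mxvec m n (A : 'M['Z_2]_(m, n)) :
  wH (mxvec A) = (\sum_i \sum_j (A i j != 0%R : nat))%N.
Proof.
rewrite wHE (reindex _ (curry_mxvec_bij _ _)) /= pair_big /=.
by apply: eq_bigr => [[i j]] _; rewrite /= mxvecE.
Qed.

Lemma Phi_iso a b (x y : Z2Z4 a b) : wH (Phi x - Phi y) = wt (x - y).
Proof.
rewrite /Phi opp_row_mx add_row_mx wH_row_mx /wt.
congr (_ + _)%N.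
rewrite -linearB /= wH_mxvec; apply: eq_bigr => j _.
rewrite big_ord_recr big_ord_recr big_ord0 /= !mxE /= add0n -gray_iso1.
by [].
Qed.

Lemma Phi_inj a b : injective (@Phi a b).
Proof.
move=> x y h.
have : wt (x - y) = 0%N by rewrite -Phi_iso h subrr wHE big1 // => i _; rewrite mxE.
move/eqP; rewrite /wt addn_eq0 wHE !sum_nat_eq0 => /andP[/forallP h1 /forallP h2].
apply/eqP; rewrite -subr_eq0; apply/eqP.
move: (x - y) h1 h2 => z h1 h2; case: z h1 h2 => z1 z2 /= h1 h2.
have -> : z1 = 0.
  apply/matrixP => i k; rewrite mxE (ord1 i); move: (h1 k) => /= hk.
  change (z1 ord0 k = 0); apply/eqP; move: hk; by case: (z1 ord0 k) => [[|[|m]] ?].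
have -> : z2 = 0.
  apply/matrixP => i k; rewrite mxE (ord1 i); move: (h2 k) => /= hk.
  change (z2 ord0 k = 0); apply/eqP; move: hk; by case: (z2 ord0 k) => [[|[|[|[|m]]]] ?].
by [].
Qed.

Lemma perfectG a b (C : {set Z2Z4 a b}) : Z2Z4_perfect1 C ->
  forall x, #|[set c in C | (wt (x - c)%R <= 1)%N]| = 1%N.
Proof.
move=> P x; rewrite -[RHS](P (Phi x)) /gray_image.
have -> : [set c in (@Phi a b) @: C | (wH (Phi x - c)%R <= 1)%N] =
          (@Phi a b) @: [set c in C | (wt (x - c)%R <= 1)%N].
  apply/setP => z; rewrite inE; apply/andP/imsetP.
    case=> /imsetP [c cC ->] hc; exists c => //.
    by rewrite inE cC -Phi_iso.
  case=> c; rewrite inE => /andP[cC hc] ->; split; first exact: imset_f.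
  by rewrite Phi_iso.
by rewrite card_imset //; apply: Phi_inj.
Qed.

Definition f4 (x : 'Z_4) : int := if x == 0 then 1 else if x == 2 then -1 else 0.

Lemma f4_add2 x : f4 (x + 2) = - f4 x.
Proof.
case: x => [[|[|[|[|m]]]] Hm]; try by [].
all: by apply/eqP; vm_compute.
Qed.

Lemma ip2D (p q c : 'Z_2) :
  (2 * ((((p + q)%R : 'Z_2) : nat) * c)%N%:R : 'Z_4) =
  2 * ((p * c)%N%:R) + 2 * ((q * c)%N%:R).
Proof.
case: p => [[|[|m]] Hm]; case: q => [[|[|k]] Hk]; case: c => [[|[|l]] Hl];
  try by []; by apply/eqP; vm_compute.
Qed.

Lemma ipD a b (x y v : Z2Z4 a b) : ip (x + y) v = ip x v + ip y v.
Proof.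
rewrite /ip.
have E1 : (2 : 'Z_4) * \sum_(i < a) ((((x + y)%R).1 ord0 i : nat) * (v.1 ord0 i : nat))%N%:R
   = 2 * \sum_(i < a) ((x.1 ord0 i : nat) * (v.1 ord0 i : nat))%N%:R
   + 2 * \sum_(i < a) ((y.1 ord0 i : nat) * (v.1 ord0 i : nat))%N%:R.
  rewrite !mulr_sumr -big_split; apply: eq_bigr => i _ /=; rewrite mxE.
  by rewrite ip2D.
have E2 : \sum_(j < b) (x + y).2 ord0 j * v.2 ord0 j =
   \sum_(j < b) x.2 ord0 j * v.2 ord0 j + \sum_(j < b) y.2 ord0 j * v.2 ord0 j.
  by rewrite -big_split; apply: eq_bigr => j _ /=; rewrite mxE mulrDl.
by rewrite E1 E2 addrACA.
Qed.

Lemma ip0 a b (v : Z2Z4 a b) : ip 0 v = 0.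
Proof.
have h := ipD 0 0 v; rewrite addr0 in h.
by apply: (addrI (ip 0 v)); rewrite addr0 -h.
Qed.

Lemma sum_tile a b (C : {set Z2Z4 a b}) (v : Z2Z4 a b) :
  (forall x, #|[set c in C | (wt (x - c)%R <= 1)%N]| = 1%N) ->
  (forall c, c \in C -> ip c v = 0) ->
  \sum_(x : Z2Z4 a b) f4 (ip x v) =
  (\sum_(y : Z2Z4 a b | (wt y <= 1)%N) f4 (ip y v)) *+ #|C|.
Proof.
move=> P Cv.
transitivity (\sum_(x : Z2Z4 a b)
   \sum_(c in [set c in C | (wt (x - c)%R <= 1)%N]) f4 (ip x v)).
  by apply: eq_bigr => x _; rewrite sumr_const P.
rewrite (exchange_big_dep (fun c => c \in C)) /=; last first.
  by move=> x c _; rewrite inE => /andP[].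
rewrite -sumr_const; apply: eq_bigr => c cC.
rewrite (reindex_inj (addIr c)) /=.
apply: eq_big => [y|y _]; first by rewrite inE cC addrK.
rewrite ipD (Cv c cC) addr0. by [].
Qed.

Lemma sum_zero a b (v y : Z2Z4 a b) : ip y v = 2 ->
  \sum_(x : Z2Z4 a b) f4 (ip x v) = 0.
Proof.
move=> hy.
have h : \sum_(x : Z2Z4 a b) f4 (ip x v) = - \sum_(x : Z2Z4 a b) f4 (ip x v).
  rewrite {1}(reindex_inj (addIr y)) /= -sumrN; apply: eq_bigr => x _.
  by rewrite ipD hy f4_add2.
move: h; set S := \sum_(x : Z2Z4 a b) _ => h.
lia.
Qed.

Definition e1 a b (i : 'I_a) : Z2Z4 a b :=
  (\row_k ((((k == i) : nat)%:R) : 'Z_2), 0).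
Definition e2 a b (j : 'I_b) (s : bool) : Z2Z4 a b :=
  (0, \row_k (if k == j then (if s then 1 else -1) else 0 : 'Z_4)).
Definition E a b (t : 'I_a + 'I_b * bool) : Z2Z4 a b :=
  match t with inl i => @e1 a b i | inr p => @e2 a b p.1 p.2 end.

Lemma valZ2b (bb : bool) : (((bb : nat)%:R : 'Z_2) : nat) = bb.
Proof. by case: bb. Qed.

Lemma ip_e1 a b (i : 'I_a) (v : Z2Z4 a b) :
  ip (@e1 a b i) v = 2 * ((v.1 ord0 i : nat))%:R.
Proof.
rewrite /ip /= (bigD1 i) //= big1 => [|k ki]; last by rewrite mxE valZ2b (negbTE ki).
rewrite big1 => [|j _]; last by rewrite mxE mul0r.
by rewrite mxE eqxx valZ2b mul1n addr0 addr0.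
Qed.

Lemma ip_e2 a b (j : 'I_b) s (v : Z2Z4 a b) :
  ip (@e2 a b j s) v = (if s then 1 else -1) * v.2 ord0 j.
Proof.
rewrite /ip /= big1 => [|i _]; last by rewrite mxE.
rewrite (bigD1 j) //= big1 => [|k kj]; last by rewrite mxE (negbTE kj) mul0r.
by rewrite mxE eqxx mulr0 add0r addr0.
Qed.

Lemma wt0 a b : wt (0 : Z2Z4 a b) = 0%N.
Proof.
rewrite /wt wHE !big1 // => i _; by rewrite mxE.
Qed.

Lemma wt_e1 a b (i : 'I_a) : wt (@e1 a b i) = 1%N.
Proof.
rewrite /wt wHE /= (bigD1 i) //= big1 => [|k ki]; last by rewrite mxE (negbTE ki).
rewrite big1 => [|j _]; last by rewrite mxE.
by rewrite mxE eqxx.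
Qed.

Lemma wt_e2 a b (j : 'I_b) s : wt (@e2 a b j s) = 1%N.
Proof.
rewrite /wt wHE /= big1 => [|i _]; last by rewrite mxE.
rewrite (bigD1 j) //= big1 => [|k kj]; last by rewrite mxE (negbTE kj).
by rewrite mxE eqxx; case: s.
Qed.

Lemma E_inj a b : injective (@E a b).
Proof.
case=> [i|[j s]] [i'|[j' s']] /= h.
- have := congr1 (fun z : Z2Z4 a b => z.1 ord0 i) h; rewrite /= !mxE eqxx.
  by case: eqP => [-> //|_ /eqP].
- have := congr1 (fun z : Z2Z4 a b => z.1 ord0 i) h; rewrite /= !mxE eqxx.
  by move/eqP.
- have := congr1 (fun z : Z2Z4 a b => z.1 ord0 i') h; rewrite /= !mxE eqxx.
  by move/eqP.
- have := congr1 (fun z : Z2Z4 a b => z.2 ord0 j) h; rewrite /= !mxE eqxx.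
  case: eqP => [<-|_]; last by clear h; case: s => /eqP.
  by clear h; case: s; case: s' => // /eqP.
Qed.

Lemma Z2_nz (x : 'Z_2) : x != 0 -> x = 1.
Proof. by case: x => [[|[|m]] Hm] //= _; apply/val_inj. Qed.

Lemma wL_eq0 (x : 'Z_4) : (wL x == 0%N) = (x == 0).
Proof. by case: x => [[|[|[|[|m]]]] Hm]. Qed.

Lemma wL1 (x : 'Z_4) : wL x = 1%N -> (if x == 1 then 1 else -1) = x.
Proof.
case: x => [[|[|[|[|m]]]] Hm] //= _.
- by apply/val_inj.
- by apply/eqP; vm_compute.
Qed.

Lemma wH_eq0 n (w : 'rV['Z_2]_n) : wH w = 0%N -> w = 0.
Proof.
rewrite wHE => /eqP; rewrite sum_nat_eq0 => /forallP h.
apply/matrixP => o k; rewrite mxE (ord1 o).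
by move: (h k); case: (w ord0 k =P 0).
Qed.

Lemma wt_eq0 a b (z : Z2Z4 a b) : wt z = 0%N -> z = 0.
Proof.
move=> h; apply: (@Phi_inj a b); apply/eqP; rewrite -subr_eq0; apply/eqP.
by apply: wH_eq0; rewrite Phi_iso subr0.
Qed.

Lemma wt1 a b (y : Z2Z4 a b) : (wt y <= 1)%N -> y != 0 -> exists t, y = E t.
Proof.
move=> h1 h0.
have {h1} h : wt y = 1%N.
  case: (wt y) h1 (@wt_eq0 a b y) => [|[|//]] _ // /(_ erefl) y0.
  by rewrite y0 eqxx in h0.
case: y h {h0} => y1 y2; rewrite /wt /= wHE.
case: (pickP (fun i => y1 ord0 i != 0)) => [i hi|hn].
  rewrite (bigD1 i) //= hi add1n => /eqP; rewrite eqSS addn_eq0.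
  rewrite !sum_nat_eq0 => /andP[/forallP r1 /forallP r2].
  exists (inl i) => /=; rewrite /e1; congr pair.
    apply/matrixP => o k; rewrite mxE (ord1 o).
    case: (k =P i) => [->|/eqP ki]; first by rewrite (Z2_nz hi).
    move: (r1 k); rewrite ki /= => /eqP.
    by case: (y1 ord0 k) => [[|[|m]] Hm] //= _; apply/val_inj.
  apply/matrixP => o k; rewrite mxE (ord1 o).
  by apply/eqP; rewrite -wL_eq0; apply/eqP; apply/eqP; move: (r2 k).
rewrite big1 => [|i _]; last by rewrite hn.
rewrite add0n.
case: (pickP (fun j => y2 ord0 j != 0)) => [j hj|hn2]; last first.
  by rewrite big1 // => j _; move: (hn2 j) => /negbFE /eqP ->.
rewrite (bigD1 j) //= => hs.
have hj1 : wL (y2 ord0 j) = 1%N.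
  move: hj; rewrite -wL_eq0; move: hs; case: (wL _) => //= n; lia.
move: hs; rewrite hj1 add1n => /eqP; rewrite eqSS sum_nat_eq0 => /forallP r2.
exists (inr (j, y2 ord0 j == 1)) => /=; rewrite /e2; congr pair.
  apply/matrixP => o k; rewrite mxE (ord1 o).
  by apply/eqP; move: (hn k) => /negbFE.
apply/matrixP => o k; rewrite mxE (ord1 o).
case: (k =P j) => [->|/eqP kj]; first by rewrite (wL1 hj1).
by apply/eqP; rewrite -wL_eq0; move: (r2 k); rewrite kj.
Qed.

Lemma f4_e1 (x : 'Z_2) : f4 (2 * (x : nat)%:R) = 1 - 2 * ((x != 0 : nat)%:R).
Proof. by case: x => [[|[|m]] Hm]. Qed.

Lemma f4_e2 (x : 'Z_4) : f4 (1 * x) + f4 (-1 * x) = 2 - 2 * (wL x)%:R.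
Proof.
case: x => [[|[|[|[|m]]]] Hm]; try by []; by apply/eqP; vm_compute.
Qed.

Lemma S_val a b (v : Z2Z4 a b) :
  \sum_(y : Z2Z4 a b | (wt y <= 1)%N) f4 (ip y v) =
  (1 + a + 2 * b)%N%:R - 2 * (wt v)%:R.
Proof.
rewrite (bigD1 (0 : Z2Z4 a b)) /=; last by rewrite wt0.
rewrite ip0.
have -> : \sum_(y : Z2Z4 a b | (wt y <= 1)%N && (y != 0)) f4 (ip y v) =
          \sum_(y in (@E a b) @: setT) f4 (ip y v).
  apply: eq_bigl => y; apply/andP/imsetP => [[h1 h0]|[t _ ->]].
    by have [t ->] := wt1 h1 h0; exists t.
  have ht : wt (E t) = 1%N by case: t => [i|[j s]]; rewrite /= ?wt_e1 ?wt_e2.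
  split; first by rewrite ht.
  by apply/eqP => h; move: ht; rewrite h wt0.
rewrite big_imset /=; last by move=> t1 t2 _ _; apply: E_inj.
rewrite (eq_bigl (fun _ => true)) => [|t]; last by rewrite inE.
rewrite big_sumType /= -(pair_big xpredT xpredT (fun j s => f4 (ip (@E a b (inr (j, s))) v))) /=.
under eq_bigr do rewrite ip_e1 f4_e1.
have -> : \sum_(j < b) \sum_(s : bool) f4 (ip (@E a b (inr (j, s))) v) =
   \sum_(j < b) (2 - 2 * (wL (v.2 ord0 j))%:R).
  by apply: eq_bigr => j _; rewrite big_bool /= !ip_e2 f4_e2.
rewrite sumrB sumr_const card_ord -mulr_sumr -natr_sum -wHE.
rewrite sumrB sumr_const card_ord -mulr_sumr -natr_sum.
rewrite /wt natrD.
have -> : f4 0 = 1 by [].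
ring.
Qed.

Lemma exists_y a b (v : Z2Z4 a b) : v != 0 -> exists y, ip y v = 2.
Proof.
move=> v0.
case: (pickP (fun i => v.1 ord0 i != 0)) => [i hi|hn1].
  by exists (@e1 a b i); rewrite ip_e1 (Z2_nz hi); apply/eqP; vm_compute.
case: (pickP (fun j => v.2 ord0 j != 0)) => [j hj|hn2]; last first.
  case: v v0 hn1 hn2 => v1 v2 /= v0 hn1 hn2; move/eqP: v0; case.
  have -> : v1 = 0.
    by apply/matrixP => o k; rewrite mxE (ord1 o); apply/eqP; move: (hn1 k) => /negbFE.
  have -> : v2 = 0.
    by apply/matrixP => o k; rewrite mxE (ord1 o); apply/eqP; move: (hn2 k) => /negbFE.
  by [].
case: (v.2 ord0 j =P 2) => [h2|hn].
  by exists (@e2 a b j true); rewrite ip_e2 mul1r.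
exists (@e2 a b j true + @e2 a b j true); rewrite ipD ip_e2 mul1r.
move: hj hn; case: (v.2 ord0 j) => [[|[|[|[|m]]]] Hm] //= _ hn.
- by apply/val_inj.
- by case: hn; apply/val_inj.
- by apply/val_inj.
Qed.

Theorem lemma3p3 (r : nat) (hr : (2 <= r)%N)
    (C : {set Z2Z4 (2 ^ r - 1) (2 ^ r.-1 * (2 ^ r - 1))}) :
  additive_code C -> Z2Z4_perfect1 C ->
  forall v, v \in dual C -> v != 0 -> wt v = (2 ^ (2 * r - 1))%N.
Proof.
move=> [C0 _] P v vD v0.
have Cv : forall c, c \in C -> ip c v = 0.
  move=> c cC; move: vD; rewrite inE => /forallP /(_ c) /implyP /(_ cC) /eqP.
  by [].
have [y hy] := exists_y v0.
have := sum_tile (perfectG P) Cv; rewrite (sum_zero hy) S_val => h.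
have Cpos : (0 < #|C|)%N by apply/card_gt0P; exists 0.
move/esym/eqP: h; rewrite mulrn_eq0 eqn0Ngt Cpos /= subr_eq0 => /eqP.
rewrite -natrM => /eqP; rewrite eqr_nat => /eqP h.
have e : (2 ^ r = 2 * 2 ^ r.-1)%N by rewrite -expnS prednK // ltnW.
have e2 : (2 ^ (2 * r - 1) = 2 * 2 ^ r.-1 * 2 ^ r.-1)%N.
  by rewrite -e -expnD; congr (2 ^ _)%N; lia.
move: h; rewrite e2; move: (wt v) => w; rewrite e; set p := (2 ^ r.-1)%N.
have : (0 < p)%N by rewrite expn_gt0.
nia.
Qed.
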